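(* Let $M$ be a parabolic-retract-compatible Coxeter matrix over a finite set $S$ and $A_S$ its associated Artin group. Then for every $x\in S$ there exists an ordinary retraction $\varphi_x:A_S\to A_{S\setminus\{x\}}$.
   Context: A Coxeter matrix over a finite set $S$ is a matrix $M=(m_{s,t})_{s,t\in S}$ with entries in $\mathbb{N}\cup\{\infty\}$, $m_{s,s}=1$, and $m_{s,t}=m_{t,s}\ge 2$ for $s\neq t$. Write $\Pi(s,t,m)$ for the alternating word $sts\cdots$ of length $m$. The Artin group is $A_S=\langle S\mid \Pi(s,t,m_{s,t})=\Pi(t,s,m_{s,t})$ for $s\neq t$, $m_{s,t}\neq\infty\rangle$. For $X\subseteq S$, $A_X$ is the subgroup generated by $X$ ($A_\emptyset$ trivial) and $M_X$ the submatrix indexed by $X$. $M$ is retract-compatible if all its entries are finite odd numbers and for every triple $a,b,c\in S$ of pairwise distinct elements, up to permuting $a,b,c$, $m_{a,b}=m_{a,c}$ and $m_{b,c}$ divides $m_{a,b}$; a rank-$1$ Coxeter matrix is always retract-compatible. $M$ is parabolic-retract-compatible if there is a partition $S=T_1\sqcup\cdots\sqcup T_k$ such that (1) each $M_{T_i}$ is retract-compatible, and (2) for each $i\neq j$ there exists $n_{ij}$, either an even number or $\infty$, with $m_{a,b}=n_{ij}$ for all $(a,b)\in T_i\times T_j$. A retraction $\varphi:A_S\to A_X$ (homomorphism restricting to the identity on $A_X$) is ordinary if $\varphi(x)=x$ for all $x\in X$ and $\varphi(y)\in X\cup\{1\}$ for all $y\in S\setminus X$. *)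

(* Defs.v *)
(* Artin groups are given by a presentation; we model them
   as words in letters (s, b) (b = true means s^-1) modulo the congruence
   generated by free cancellation and the Artin relations. *)
From mathcomp Require Import all_boot.
Set Implicit Arguments. Unset Strict Implicit. Unset Printing Implicit Defensive.

Section Artin.
Variable S : finType.

(* Coxeter matrix: entries in N ∪ {∞}; None stands for ∞. *)
Definition coxeter_matrix (M : S -> S -> option nat) : Prop :=
  (forall s, M s s = Some 1) /\
  (forall s t, M s t = M t s) /\
  (forall s t, s != t -> forall k, M s t = Some k -> 2 <= k).

Definition letter := (S * bool)%type.
Definition word := seq letter.
Definition inv_letter (a : letter) : letter := (a.1, ~~ a.2).

Definition Pi (s t : S) (m : nat) : word :=
  mkseq (fun i => (if odd i then t else s, false)) m.

Inductive artin_eq (M : S -> S -> option nat) : word -> word -> Prop :=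
| ae_refl u : artin_eq M u u
| ae_sym u v : artin_eq M u v -> artin_eq M v u
| ae_trans u v w : artin_eq M u v -> artin_eq M v w -> artin_eq M u w
| ae_cat u u' v v' : artin_eq M u u' -> artin_eq M v v' ->
    artin_eq M (u ++ v) (u' ++ v')
| ae_free (a : letter) : artin_eq M [:: a; inv_letter a] [::]
| ae_rel (s t : S) (k : nat) : s != t -> M s t = Some k ->
    artin_eq M (Pi s t k) (Pi t s k).

Definition word_over (X : {set S}) (w : word) : bool :=
  all (fun a : letter => a.1 \in X) w.

Definition ordinary_retraction (M : S -> S -> option nat) (X : {set S})
    (phi : word -> word) : Prop :=
  (forall u v, artin_eq M u v -> artin_eq M (phi u) (phi v)) /\
  (forall u v, artin_eq M (phi (u ++ v)) (phi u ++ phi v)) /\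
  (forall u, exists2 w, word_over X w & artin_eq M (phi u) w) /\
  (forall w, word_over X w -> artin_eq M (phi w) w) /\
  (forall x, x \in X -> artin_eq M (phi [:: (x, false)]) [:: (x, false)]) /\
  (forall y, y \notin X ->
     artin_eq M (phi [:: (y, false)]) [::] \/
     exists2 x, x \in X & artin_eq M (phi [:: (y, false)]) [:: (x, false)]).

Definition retract_compatible (M : S -> S -> option nat) (T : {set S}) : Prop :=
  (forall a b, a \in T -> b \in T -> exists2 k, M a b = Some k & odd k) /\
  (forall a b c, a \in T -> b \in T -> c \in T ->
     a != b -> a != c -> b != c ->
     exists a' b' c', [set a'; b'; c'] = [set a; b; c] /\
       M a' b' = M a' c' /\
       exists p q, [/\ M b' c' = Some p, M a' b' = Some q & p %| q]).

Definition parabolic_retract_compatible (M : S -> S -> option nat) : Prop :=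
  exists P : {set {set S}},
    partition P [set: S] /\
    (forall T, T \in P -> retract_compatible M T) /\
    (forall T T', T \in P -> T' \in P -> T != T' ->
       exists n : option nat,
         (n = None \/ exists2 k, n = Some k & ~~ odd k) /\
         (forall a b, a \in T -> b \in T' -> M a b = n)).

End Artin.

(* Main.v *)
Require Import Defs.
From mathcomp Require Import all_boot.
Set Implicit Arguments. Unset Strict Implicit. Unset Printing Implicit Defensive.

Lemma Pi_S (S : finType) (s t : S) k : Pi s t k.+1 = (s,false) :: Pi t s k.
Proof.
rewrite /Pi /mkseq -add1n iotaD map_cat /=; rewrite -[in iota 1 k](addn0 1) iotaDl -map_comp.
congr (_ :: _); apply: eq_map => i /=; by case: (odd i).
Qed.

Lemma Pi_add (S : finType) (s t : S) a b :
  Pi s t (a + b) = Pi s t a ++ (if odd a then Pi t s b else Pi s t b).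
Proof.
elim: a s t => [|a IH] s t; first by [].
rewrite addSn !Pi_S IH /=; by case: (odd a).
Qed.

Lemma dihedral (S : finType) (M : S -> S -> option nat) s t r j :
  s != t -> M s t = Some r -> odd r -> artin_eq M (Pi s t (r * j)) (Pi t s (r * j)).
Proof.
move=> st hr or; elim: j => [|j IH]; first by rewrite muln0; apply: ae_refl.
rewrite mulnS !Pi_add or; apply: ae_cat; [exact: ae_rel st hr | exact: ae_sym].
Qed.

Lemma all_Pi (S : finType) (P : pred (letter S)) s t k :
  P (s,false) -> P (t,false) -> all P (Pi s t k).
Proof. by elim: k s t => [|k IH] s t Ps Pt //; rewrite Pi_S /= Ps IH. Qed.

Definition phi_of (S : finType) (f : S -> option S) (w : word S) : word S :=
  flatten (map (fun a : letter S => if f a.1 is Some s then [:: (s, a.2)] else [::]) w).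

Lemma phi_cat (S : finType) (f : S -> option S) u v :
  phi_of f (u ++ v) = phi_of f u ++ phi_of f v.
Proof. by rewrite /phi_of map_cat flatten_cat. Qed.

Lemma phi_id (S : finType) (f : S -> option S) x w :
  (forall s, s != x -> f s = Some s) -> word_over [set~ x] w -> phi_of f w = w.
Proof.
move=> hf; rewrite /phi_of; elim: w => [|[s b] w IH] //= /andP[hs hw].
rewrite in_setC1 in hs; by rewrite hf //= IH.
Qed.

Lemma phi_map (S : finType) (g : S -> S) w :
  phi_of (fun s => Some (g s)) w = map (fun a => (g a.1, a.2)) w.
Proof. by rewrite /phi_of; elim: w => //= a w ->. Qed.

Lemma Pi_map (S : finType) (g : S -> S) s t k :
  map (fun a => (g a.1, a.2)) (Pi s t k) = Pi (g s) (g t) k.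
Proof. by elim: k s t => [|k IH] s t //; rewrite !Pi_S /= IH. Qed.

Lemma retract_gen (S : finType) (M : S -> S -> option nat) x (f : S -> option S) :
  (forall s, s != x -> f s = Some s) ->
  (f x = None \/ exists2 z, f x = Some z & z != x) ->
  (forall s t k, s != t -> M s t = Some k ->
     artin_eq M (phi_of f (Pi s t k)) (phi_of f (Pi t s k))) ->
  ordinary_retraction M [set~ x] (phi_of f).
Proof.
move=> hf hx hrel; split.
  move=> u v; elim => {u v} [u|u v _ IH|u v w _ IH1 _ IH2|u u' v v' _ IH1 _ IH2|a|s t k st hk].
  - exact: ae_refl.
  - exact: ae_sym.
  - exact: ae_trans IH1 IH2.
  - rewrite !phi_cat; exact: ae_cat.
  - case: a => s b; rewrite /phi_of /= /inv_letter /=.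
    case: (f s) => [s'|] /=; [exact: (ae_free M (s', b)) | exact: ae_refl].
  - exact: hrel.
split; first by move=> u v; rewrite phi_cat; exact: ae_refl.
split.
  move=> u; exists (phi_of f u); last exact: ae_refl.
  rewrite /word_over /phi_of; elim: u => [|[s b] u IH] //=; rewrite all_cat IH andbT.
  case: (eqVneq s x) => [->|sx].
    by case: hx => [->|[z -> zx]] //=; rewrite in_setC1 zx.
  by rewrite hf //= in_setC1 sx.
split; first by move=> w hw; rewrite (phi_id hf) //; exact: ae_refl.
split; first by move=> y hy; rewrite (phi_id hf) /word_over /= ?hy //; exact: ae_refl.
move=> y; rewrite in_setC1 negbK => /eqP ->; rewrite /phi_of /=.
case: hx => [->|[z -> zx]]; [left|right]; first exact: ae_refl.
by exists z; [rewrite in_setC1 | exact: ae_refl].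
Qed.

Lemma rel_from_x (S : finType) (M : S -> S -> option nat) x (f : S -> option S) :
  (forall s, s != x -> f s = Some s) -> (forall s t, M s t = M t s) ->
  (forall t k, t != x -> M x t = Some k ->
     artin_eq M (phi_of f (Pi x t k)) (phi_of f (Pi t x k))) ->
  forall s t k, s != t -> M s t = Some k ->
     artin_eq M (phi_of f (Pi s t k)) (phi_of f (Pi t s k)).
Proof.
move=> hf Msym key s t k st hk.
case: (eqVneq s x) => [esx|sx].
  by subst s; apply: key => //; rewrite eq_sym.
case: (eqVneq t x) => [etx|tx].
  by subst t; apply: ae_sym; apply: key => //; rewrite Msym.
rewrite !(phi_id hf); first exact: ae_rel.
  by rewrite /word_over; apply: all_Pi; rewrite /= in_setC1.
by rewrite /word_over; apply: all_Pi; rewrite /= in_setC1.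
Qed.

Lemma single_rel (S : finType) x (t : S) n :
  t != x ->
  phi_of (fun s => if s == x then None else Some s) (Pi x t n.*2) =
  phi_of (fun s => if s == x then None else Some s) (Pi t x n.*2).
Proof.
move=> tx; elim: n => [|n IH] //.
rewrite doubleS !Pi_S /phi_of /= eqxx (negbTE tx) /=.
rewrite /phi_of in IH; by rewrite IH.
Qed.
Theorem lemma3p10 (S : finType) (M : S -> S -> option nat) :
  coxeter_matrix M -> parabolic_retract_compatible M ->
  forall x : S, exists phi : word S -> word S,
    ordinary_retraction M [set~ x] phi.
Proof.
move=> [M11 [Msym Mge2]] [P [/and3P[/eqP hcov htriv h0] [hrc hn]]] x.
set T := pblock P x.
have hxT : x \in T by rewrite mem_pblock hcov inE.
have hT : T \in P by apply: pblock_mem; rewrite hcov inE.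
have out : forall y, y \notin T -> exists n : option nat,
    (n = None \/ exists2 k, n = Some k & ~~ odd k) /\ (forall a, a \in T -> M a y = n).
  move=> y yT.
  have hyc : y \in cover P by rewrite hcov inE.
  have hT' := pblock_mem hyc.
  have yT' : y \in pblock P y by rewrite mem_pblock.
  have TT' : T != pblock P y by apply/eqP => E; rewrite E yT' in yT.
  have [n [hn1 hn2]] := hn _ _ hT hT' TT'.
  by exists n; split => // a aT; apply: hn2.
case: (pickP (fun z => (z \in T) && (z != x))) => [z0 /andP[z0T z0x] | none].
  have [z /andP[zT zx] zmin] := @arg_minnP _ z0 (fun z => (z \in T) && (z != x))
     (fun z => odflt 0 (M x z)) (introT andP (conj z0T z0x)).
  pose g s := if s == x then z else s.
  exists (phi_of (fun s => Some (g s))).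
  apply: retract_gen.
  - by move=> s /negbTE sx; rewrite /g sx.
  - by right; exists z => //; rewrite /g eqxx.
  apply: (@rel_from_x _ _ x) => //; first by move=> s /negbTE sx; rewrite /g sx.
  move=> t k tx hk.
  rewrite !phi_map !Pi_map /g eqxx (negbTE tx).
  case: (eqVneq t z) => [->|tz]; first exact: ae_refl.
  case: (boolP (t \in T)) => tT; last first.
    have [n [_ hn2]] := out t tT.
    apply: ae_rel; first by rewrite eq_sym.
    by rewrite hn2 // -(hn2 x hxT).
  have [hodd htri] := hrc T hT.
  have [p hp op] := hodd x z hxT zT.
  have [r hr or] := hodd z t zT tT.
  have ple : p <= k by have := zmin t; rewrite tT tx hp hk /=; apply.
  suff hdiv : r %| k.
    rewrite -(divnK hdiv) mulnC; apply: dihedral hr or; by rewrite eq_sym.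
  have xz : x != z by rewrite eq_sym.
  have xt : x != t by rewrite eq_sym.
  have zt : z != t by rewrite eq_sym.
  have [a' [b' [c' [hset [heq [p' [q' [h1 h2 h3]]]]]]]] := htri x z t hxT zT tT xz xt zt.
  have ma : a' \in [set x; z; t] by rewrite -hset !inE eqxx.
  have mb : b' \in [set x; z; t] by rewrite -hset !inE eqxx !orbT.
  have mc : c' \in [set x; z; t] by rewrite -hset !inE eqxx !orbT.
  have mx : x \in [set a'; b'; c'] by rewrite hset !inE eqxx.
  have mz : z \in [set a'; b'; c'] by rewrite hset !inE eqxx !orbT.
  have mt : t \in [set a'; b'; c'] by rewrite hset !inE eqxx !orbT.
  move: ma mb mc; rewrite !inE.
  move=> /orP[/orP[]|] /eqP ? /orP[/orP[]|] /eqP ? /orP[/orP[]|] /eqP ?; subst a' b' c';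
  move: mx mz mt; rewrite !inE !eqxx ?(negbTE xz) ?(negbTE xt) ?(negbTE zt) ?(negbTE zx) ?(negbTE tx) ?(negbTE tz) /= => mx mz mt; try discriminate;
  rewrite ?(Msym t x) ?(Msym z x) ?(Msym t z) ?hp ?hk ?hr in heq h1 h2;
  move: heq h1 h2 => [] ? [] ? [] ?; subst.
  all: try done; try by rewrite dvdnn.
  all: try match goal with h : is_true (?a %| ?b), hl : is_true (?b <= ?a), ho : is_true (odd ?b) |- is_true (?b %| ?a) =>
    have e : a = b by apply/eqP; rewrite eqn_leq hl andbT; exact: dvdn_leq (odd_gt0 ho) h
  end.
  all: try by rewrite e.
exists (phi_of (fun s => if s == x then None else Some s)).
apply: retract_gen.
- by move=> s /negbTE ->.
- by left; rewrite eqxx.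
apply: (@rel_from_x _ _ x) => //; first by move=> s /negbTE ->.
move=> t k tx hk.
have tT : t \notin T by have := none t; rewrite /= tx andbT => ->.
have [n [[En|[k' En ek']] hn2]] := out t tT; rewrite hn2 // En in hk; first by [].
case: hk => ?; subst k'.
rewrite -(odd_double_half k) (negbTE ek') add0n single_rel //; exact: ae_refl.
Qed.
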